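(* Let $\mathcal{X}$ be a real Banach space and $g:[a,b]\to\mathcal{X}^*$. Assume that $g$ is Denjoy–Gel'fand integrable on $[a,t]$ for every $t\in[a,b)$ and that for each $y\in\mathcal{X}$ the limit $\lim_{t\to b^-}\mathcal{D}\int_a^t yg$ exists. Then $g$ is Denjoy–Gel'fand integrable on $[a,b]$ and $$\Big\langle y,\ \mathcal{DG}\int_a^b g\Big\rangle=\lim_{t\to b^-}\Big\langle y,\ \mathcal{DG}\int_a^t g\Big\rangle\quad\text{for each } y\in\mathcal{X}.$$
   Context: For $y\in\mathcal{X}$, $yg$ denotes the real function $t\mapsto g(t)(y)$. A function $F:[a,b]\to\mathbb{R}$ is AC on a set $E$ if for every $\epsilon>0$ there is $\eta>0$ such that for every finite family of nonoverlapping intervals $[c_i,d_i]$ with endpoints in $E$ and $\sum(d_i-c_i)<\eta$ one has $\sum|F(d_i)-F(c_i)|<\epsilon$; $F$ is ACG on $[a,b]$ if $F$ is continuous on $[a,b]$ and $[a,b]$ is a countable union of sets on each of which $F$ is AC. A function $h:[a,b]\to\mathbb{R}$ is Denjoy integrable on $[a,b]$ if there is an ACG function $F$ on $[a,b]$ whose approximate derivative equals $h$ a.e.; then $\mathcal{D}\int_a^b h=F(b)-F(a)$ (and similarly on subintervals). A function $g:[a,b]\to\mathcal{X}^*$ is Denjoy–Gel'fand integrable on $[a,b]$ if $yg$ is Denjoy integrable on $[a,b]$ for each $y\in\mathcal{X}$ and for every interval $I\subset[a,b]$ there is $y_I^*\in\mathcal{X}^*$ with $y_I^*(y)=\mathcal{D}\int_I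 yg$ for all $y\in\mathcal{X}$; one writes $\mathcal{DG}\int_I g=y_I^*$. *)

(* Defs.v *)
From Stdlib Require Import Reals.
Open Scope R_scope.

Record BanachSpace := {
  bs_car :> Type;
  bs_zero : bs_car;
  bs_add : bs_car -> bs_car -> bs_car;
  bs_opp : bs_car -> bs_car;
  bs_scal : R -> bs_car -> bs_car;
  bs_norm : bs_car -> R;
  bs_add_assoc : forall x y z, bs_add x (bs_add y z) = bs_add (bs_add x y) z;
  bs_add_comm : forall x y, bs_add x y = bs_add y x;
  bs_add_zero : forall x, bs_add x bs_zero = x;
  bs_add_opp : forall x, bs_add x (bs_opp x) = bs_zero;
  bs_scal_distr_l : forall r x y, bs_scal r (bs_add x y) = bs_add (bs_scal r x) (bs_scal r y);
  bs_scal_distr_r : forall r s x, bs_scal (r + s) x = bs_add (bs_scal r x) (bs_scal s x);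
  bs_scal_assoc : forall r s x, bs_scal r (bs_scal s x) = bs_scal (r * s) x;
  bs_scal_one : forall x, bs_scal 1 x = x;
  bs_norm_eq0 : forall x, bs_norm x = 0 -> x = bs_zero;
  bs_norm_triangle : forall x y, bs_norm (bs_add x y) <= bs_norm x + bs_norm y;
  bs_norm_scal : forall r x, bs_norm (bs_scal r x) = Rabs r * bs_norm x;
  bs_complete : forall u : nat -> bs_car,
    (forall eps, 0 < eps -> exists N, forall m n, (N <= m)%nat -> (N <= n)%nat ->
        bs_norm (bs_add (u m) (bs_opp (u n))) < eps) ->
    exists l, forall eps, 0 < eps -> exists N, forall n, (N <= n)%nat ->
        bs_norm (bs_add (u n) (bs_opp l)) < eps
}.

Definition is_dual (X : BanachSpace) (f : X -> R) : Prop :=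
  (forall x y, f (bs_add X x y) = f x + f y) /\
  (forall r x, f (bs_scal X r x) = r * f x) /\
  (exists M, forall x, Rabs (f x) <= M * bs_norm X x).

Definition dual (X : BanachSpace) := { f : X -> R | is_dual X f }.
Definition ev {X : BanachSpace} (f : dual X) (y : X) : R := proj1_sig f y.

Fixpoint fsum (f : nat -> R) (n : nat) : R :=
  match n with O => 0 | S k => fsum f k + f k end.

(* m^*(E) <= c  (Lebesgue outer measure via countable interval covers) *)
Definition outer_le (E : R -> Prop) (c : R) : Prop :=
  forall eps, 0 < eps -> exists an bn : nat -> R,
    (forall x, E x -> exists n, an n < x < bn n) /\
    (forall n, an n <= bn n) /\
    (forall N, fsum (fun n => bn n - an n) N <= c + eps).

Definition null (E : R -> Prop) : Prop := outer_le E 0.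

Definition density_zero (E : R -> Prop) (x : R) : Prop :=
  forall eta, 0 < eta -> exists delta, 0 < delta /\
    forall r, 0 < r < delta -> outer_le (fun t => E t /\ x - r <= t <= x + r) (eta * (2 * r)).

Definition ap_deriv (F : R -> R) (a b x l : R) : Prop :=
  forall eps, 0 < eps ->
    density_zero (fun t => a <= t <= b /\ t <> x /\
                          eps <= Rabs ((F t - F x) / (t - x) - l)) x.

Definition AC_on (F : R -> R) (E : R -> Prop) : Prop :=
  forall eps, 0 < eps -> exists eta, 0 < eta /\
    forall (n : nat) (c d : nat -> R),
      (forall i, (i < n)%nat -> E (c i) /\ E (d i) /\ c i <= d i) ->
      (forall i j, (i < n)%nat -> (j < n)%nat -> i <> j -> d i <= c j \/ d j <= c i) ->
      fsum (fun i => d i - c i) n < eta ->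
      fsum (fun i => Rabs (F (d i) - F (c i))) n < eps.

Definition cont_on (F : R -> R) (a b : R) : Prop :=
  forall x, a <= x <= b -> forall eps, 0 < eps -> exists delta, 0 < delta /\
    forall t, a <= t <= b -> Rabs (t - x) < delta -> Rabs (F t - F x) < eps.

Definition ACG (F : R -> R) (a b : R) : Prop :=
  cont_on F a b /\
  exists En : nat -> R -> Prop,
    (forall x, a <= x <= b -> exists n, En n x) /\
    (forall n x, En n x -> a <= x <= b) /\
    (forall n, AC_on F (En n)).

Definition D_int (h : R -> R) (c d v : R) : Prop :=
  c <= d /\
  exists F, ACG F c d /\
    null (fun x => c <= x <= d /\ ~ ap_deriv F c d x (h x)) /\
    v = F d - F c.

Definition D_integrable (h : R -> R) (c d : R) : Prop := exists v, D_int h c d v.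

Definition yg {X : BanachSpace} (g : R -> dual X) (y : X) : R -> R :=
  fun t => ev (g t) y.

Definition DG_int {X : BanachSpace} (g : R -> dual X) (c d : R) (ys : dual X) : Prop :=
  forall y, D_int (yg g y) c d (ev ys y).

Definition DG_integrable {X : BanachSpace} (g : R -> dual X) (a b : R) : Prop :=
  (forall y, D_integrable (yg g y) a b) /\
  (forall c d, a <= c -> c <= d -> d <= b -> exists ys, DG_int g c d ys).

(* Main.v *)
Require Import Defs.
From Stdlib Require Import Reals Lra Lia Cantor ClassicalEpsilon Classical.
Open Scope R_scope.

Lemma ch {A B : Type} (P : A -> B -> Prop) : (forall a, exists b, P a b) -> exists f, forall a, P a (f a).
Proof.
  intros H. exists (fun a => proj1_sig (constructive_indefinite_description _ (H a))).
  intro a. exact (proj2_sig (constructive_indefinite_description _ (H a))).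
Qed.

Lemma fsum_ext f g n : (forall i, (i < n)%nat -> f i = g i) -> fsum f n = fsum g n.
Proof.
  induction n; simpl; intros H; auto. rewrite IHn by (intros; apply H; lia). rewrite H by lia. auto.
Qed.

Lemma fsum_zero n : fsum (fun _ => 0) n = 0.
Proof. induction n; simpl; auto. rewrite IHn; ring. Qed.

Lemma fsum_S f n : fsum f (S n) = fsum f n + f n.
Proof. reflexivity. Qed.

Lemma fsum_nonneg f n : (forall i, 0 <= f i) -> 0 <= fsum f n.
Proof. intros H; induction n; simpl; [lra|]. specialize (H n); lra. Qed.

Lemma fsum_mono_n f n m : (forall i, 0 <= f i) -> (n <= m)%nat -> fsum f n <= fsum f m.
Proof.
  intros H Hnm. induction Hnm; [lra|]. simpl. specialize (H m); lra.
Qed.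

Lemma fsum_le_term f n i : (forall i, 0 <= f i) -> (i < n)%nat -> f i <= fsum f n.
Proof.
  intros H Hi. apply Rle_trans with (fsum f (S i)).
  simpl. pose proof (fsum_nonneg f i H); lra.
  apply fsum_mono_n; auto.
Qed.

Lemma fsum_plus f g n : fsum (fun i => f i + g i) n = fsum f n + fsum g n.
Proof. induction n; simpl; [ring|]. rewrite IHn; ring. Qed.

Lemma fsum_le f g n : (forall i, (i < n)%nat -> f i <= g i) -> fsum f n <= fsum g n.
Proof.
  induction n; simpl; intros H; [lra|].
  assert (fsum f n <= fsum g n) by (apply IHn; intros; apply H; lia).
  specialize (H n (Nat.lt_succ_diag_r n)); lra.
Qed.

Lemma fsum_first f n : (forall i, (1 <= i)%nat -> f i = 0) -> fsum f n <= Rmax 0 (f 0%nat).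
Proof.
  intros H. induction n; simpl. apply Rmax_l.
  destruct n. simpl. unfold Rmax; destruct Rle_dec as [r|r]; [lra| apply Rnot_le_lt in r; lra].
  rewrite H by lia. lra.
Qed.

Lemma outer_le_mono (E E' : R -> Prop) c : (forall x, E' x -> E x) -> outer_le E c -> outer_le E' c.
Proof.
  intros Hs H eps He. destruct (H eps He) as (an & bn & H1 & H2 & H3).
  exists an, bn; repeat split; auto.
Qed.

Lemma null_mono (E E' : R -> Prop) : (forall x, E' x -> E x) -> null E -> null E'.
Proof. apply outer_le_mono. Qed.

Lemma null_single p : null (fun x => x = p).
Proof.
  intros eps He. exists (fun n => match n with O => p - eps/4 | _ => 0 end).
  exists (fun n => match n with O => p + eps/4 | _ => 0 end).
  repeat split.
  - intros x ->. exists O. lra.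
  - intros [|n]; lra.
  - intros N. eapply Rle_trans. apply fsum_first. intros [|i] Hi; [lia|]. simpl; ring.
    unfold Rmax; destruct Rle_dec; lra.
Qed.

Fixpoint tri (d : nat) : nat := match d with O => O | S d => (S d + tri d)%nat end.

Lemma to_nat_tri x y : to_nat (x, y) = (y + tri (y + x))%nat.
Proof.
  unfold to_nat. f_equal.
Qed.

Lemma of_nat_tri D y : (y <= D)%nat -> of_nat (y + tri D)%nat = ((D - y)%nat, y).
Proof.
  intros H. rewrite <- (cancel_of_to ((D - y)%nat, y)). f_equal.
  rewrite to_nat_tri. f_equal. f_equal. lia.
Qed.

Definition merge (f : nat -> nat -> R) (k : nat) : R := let (x, y) := of_nat k in f y x.

Lemma fsum_block f D j : (j <= S D)%nat ->
  fsum (merge f) (j + tri D) = fsum (merge f) (tri D) + fsum (fun y => f y (D - y)%nat) j.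
Proof.
  induction j; intros H; simpl; [ring|].
  rewrite IHj by lia. unfold merge at 2. rewrite of_nat_tri by lia. ring.
Qed.

Lemma fsum_tri f D : fsum (merge f) (tri D) = fsum (fun n => fsum (f n) (D - n)) D.
Proof.
  induction D. simpl; auto.
  change (tri (S D)) with (S D + tri D)%nat.
  rewrite fsum_block by lia. rewrite IHD.
  assert (E : fsum (fun n => fsum (f n) (S D - n)) (S D) =
              fsum (fun n => fsum (f n) (D - n) + f n (D - n)%nat) (S D)).
  { apply fsum_ext. intros i Hi. replace (S D - i)%nat with (S (D - i)) by lia. simpl. auto. }
  rewrite E, fsum_plus. simpl. replace (D - D)%nat with O by lia. simpl. ring.
Qed.

Lemma tri_ge D : (D <= tri D)%nat.
Proof. induction D; simpl; lia. Qed.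

Lemma geom_sum eps D : fsum (fun n => eps / 2 ^ (S n)) D = eps - eps / 2 ^ D.
Proof.
  induction D. simpl. field. rewrite fsum_S, IHD. simpl. field. apply pow_nonzero; lra.
Qed.

Lemma null_union (SS : R -> Prop) (B : nat -> R -> Prop) :
  (forall n, null (B n)) -> (forall x, SS x -> exists n, B n x) -> null SS.
Proof.
  intros HB HS eps He.
  assert (H: forall n, exists p : (nat -> R) * (nat -> R),
    (forall x, B n x -> exists m, fst p m < x < snd p m) /\ (forall m, fst p m <= snd p m) /\
    (forall N, fsum (fun m => snd p m - fst p m) N <= 0 + eps / 2 ^ (S n))).
  { intros n. assert (0 < eps / 2 ^ (S n)) by (apply Rdiv_lt_0_compat; [lra| apply pow_lt; lra]).
    destruct (HB n _ H) as (an & bn & ?&?&?). exists (an, bn); simpl; auto. }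
  apply ch in H. destruct H as [p Hp].
  exists (merge (fun n m => fst (p n) m)), (merge (fun n m => snd (p n) m)).
  repeat split.
  - intros x Sx. destruct (HS x Sx) as [n Bn]. destruct (proj1 (Hp n) x Bn) as [m Hm].
    exists (to_nat (m, n)). unfold merge. rewrite cancel_of_to. auto.
  - intros k. unfold merge. destruct (of_nat k). apply Hp.
  - intros N. assert (Hnn : forall k, 0 <= merge (fun n m => snd (p n) m) k - merge (fun n m => fst (p n) m) k).
    { intros k; unfold merge; destruct (of_nat k). pose proof (proj1 (proj2 (Hp n0)) n). lra. }
    eapply Rle_trans. apply fsum_mono_n with (m := tri N); [exact Hnn| apply tri_ge].
    assert (E: fsum (fun k => merge (fun n m => snd (p n) m) k - merge (fun n m => fst (p n) m) k) (tri N)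
      = fsum (merge (fun n m => snd (p n) m - fst (p n) m)) (tri N)).
    { apply fsum_ext; intros; unfold merge; destruct (of_nat i); auto. }
    rewrite E, fsum_tri.
    eapply Rle_trans. apply fsum_le with (g := fun n => eps / 2 ^ (S n)).
    intros i _. pose proof (proj2 (proj2 (Hp i)) (N - i)%nat). lra.
    rewrite geom_sum. assert (0 < eps / 2 ^ N) by (apply Rdiv_lt_0_compat; [lra| apply pow_lt; lra]). lra.
Qed.

Definition bad (h F : R -> R) c d := fun x => c <= x <= d /\ ~ ap_deriv F c d x (h x).
Definition prim (h F : R -> R) c d := ACG F c d /\ null (fun x => c <= x <= d /\ ~ ap_deriv F c d x (h x)).

Lemma density_local (E E' : R -> Prop) x d0 : 0 < d0 ->
  (forall t, x - d0 < t < x + d0 -> E' t -> E t) -> density_zero E x -> density_zero E' x.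
Proof.
  intros Hd0 Hs H eta He. destruct (H eta He) as [dl [Hdl Hr]].
  exists (Rmin dl d0). split. apply Rmin_pos; auto.
  intros r Hr'. assert (r < dl) by (pose proof (Rmin_l dl d0); lra).
  assert (r < d0) by (pose proof (Rmin_r dl d0); lra).
  apply outer_le_mono with (E := fun t => E t /\ x - r <= t <= x + r).
  intros t [Ht1 Ht2]. split; auto. apply Hs; auto; lra.
  apply Hr; lra.
Qed.

Lemma ap_local F c d u v x l : c <= u -> u < x -> x < v -> v <= d ->
  ap_deriv F u v x l -> ap_deriv F c d x l.
Proof.
  intros H1 H2 H3 H4 H eps He. apply density_local with (d0 := Rmin (x - u) (v - x))
    (E := fun t => u <= t <= v /\ t <> x /\ eps <= Rabs ((F t - F x) / (t - x) - l)).
  apply Rmin_pos; lra.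
  intros t Ht (? & ? & ?). pose proof (Rmin_l (x-u) (v-x)); pose proof (Rmin_r (x-u) (v-x)).
  repeat split; auto; lra.
  apply H; auto.
Qed.

Lemma ap_restrict F c d u v x l : c <= u -> v <= d ->
  ap_deriv F c d x l -> ap_deriv F u v x l.
Proof.
  intros H1 H2 H eps He. apply density_local with (d0 := 1)
    (E := fun t => c <= t <= d /\ t <> x /\ eps <= Rabs ((F t - F x) / (t - x) - l)).
  lra. intros t Ht (? & ? & ?). repeat split; auto; lra.
  apply H; auto.
Qed.

Lemma ap_shift F H C u v x l : (forall t, u <= t <= v -> H t = F t + C) -> u <= x <= v ->
  ap_deriv F u v x l -> ap_deriv H u v x l.
Proof.
  intros HE Hx Ha eps He. apply density_local with (d0 := 1)
    (E := fun t => u <= t <= v /\ t <> x /\ eps <= Rabs ((F t - F x) / (t - x) - l)).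
  lra. intros t Ht (Hu & Hn & Hq). repeat split; auto; try lra.
  rewrite (HE t), (HE x) in Hq by auto. replace (F t - F x) with (F t + C - (F x + C)) by ring. auto.
  apply Ha; auto.
Qed.

Lemma AC_mono F (E E' : R -> Prop) : (forall x, E' x -> E x) -> AC_on F E -> AC_on F E'.
Proof.
  intros Hs H eps He. destruct (H eps He) as [eta [Heta Hh]]. exists eta; split; auto.
  intros n c d H1 H2 H3. apply Hh; auto. intros i Hi. destruct (H1 i Hi) as (?&?&?). auto.
Qed.

Lemma AC_shift F H C (E : R -> Prop) : (forall x, E x -> H x = F x + C) -> AC_on F E -> AC_on H E.
Proof.
  intros HE Ha eps He. destruct (Ha eps He) as [eta [Heta Hh]]. exists eta; split; auto.
  intros n c d H1 H2 H3. erewrite fsum_ext. apply (Hh n c d); auto.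
  intros i Hi; simpl. destruct (H1 i Hi) as (?&?&?). rewrite !HE by auto. f_equal; ring.
Qed.

Lemma AC_single F p : AC_on F (fun x => x = p).
Proof.
  intros eps He. exists 1; split; [lra|]. intros n c d H1 H2 H3.
  erewrite fsum_ext. rewrite fsum_zero; auto.
  intros i Hi; simpl. destruct (H1 i Hi) as (-> & -> & _). rewrite Rminus_diag, Rabs_R0; auto.
Qed.

Lemma cont_restrict F c d u v : c <= u -> v <= d -> cont_on F c d -> cont_on F u v.
Proof.
  intros H1 H2 H x Hx eps He. destruct (H x ltac:(lra) eps He) as [dl [Hdl Hh]].
  exists dl; split; auto. intros t Ht. apply Hh; lra.
Qed.

Lemma cont_shift F H C u v : (forall t, u <= t <= v -> H t = F t + C) -> cont_on F u v -> cont_on H u v.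
Proof.
  intros HE Hc x Hx eps He. destruct (Hc x Hx eps He) as [dl [Hdl Hh]].
  exists dl; split; auto. intros t Ht Htx. rewrite !HE by auto.
  replace (F t + C - (F x + C)) with (F t - F x) by ring. auto.
Qed.

Lemma cont_concat F u v w : cont_on F u v -> cont_on F v w -> cont_on F u w.
Proof.
  intros H1 H2 x Hx eps He.
  destruct (Rlt_le_dec x v) as [Hlt|Hle].
  - destruct (H1 x ltac:(lra) eps He) as [dl [Hdl Hh]].
    exists (Rmin dl (v - x)); split. apply Rmin_pos; lra.
    intros t Ht Htx. pose proof (Rmin_l dl (v-x)); pose proof (Rmin_r dl (v-x)).
    apply Hh. split; try lra. apply Rabs_def2 in Htx; lra. lra.
  - destruct (Rle_lt_or_eq_dec _ _ Hle) as [Hlt|Heq].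
    + destruct (H2 x ltac:(lra) eps He) as [dl [Hdl Hh]].
      exists (Rmin dl (x - v)); split. apply Rmin_pos; lra.
      intros t Ht Htx. pose proof (Rmin_l dl (x-v)); pose proof (Rmin_r dl (x-v)).
      apply Hh. split; try lra. apply Rabs_def2 in Htx; lra. lra.
    + subst x. destruct (H1 v ltac:(lra) eps He) as [d1 [Hd1 Hh1]].
      destruct (H2 v ltac:(lra) eps He) as [d2 [Hd2 Hh2]].
      exists (Rmin d1 d2); split. apply Rmin_pos; lra.
      intros t Ht Htx. pose proof (Rmin_l d1 d2); pose proof (Rmin_r d1 d2).
      destruct (Rle_dec t v). apply Hh1; lra. apply Hh2; lra.
Qed.

Lemma ACG_restrict F c d u v : c <= u -> v <= d -> ACG F c d -> ACG F u v.
Proof.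
  intros H1 H2 [Hc [En (HE1 & HE2 & HE3)]]. split. eapply cont_restrict; eauto.
  exists (fun m x => En m x /\ u <= x <= v). refine (conj _ (conj _ _)).
  - intros x Hx. destruct (HE1 x ltac:(lra)) as [n Hn]. exists n; auto.
  - intros n x [_ ?]; lra.
  - intros n. apply AC_mono with (E := En n). intros x [? _]; auto. auto.
Qed.

Lemma ACG_shift F H C u v : (forall t, u <= t <= v -> H t = F t + C) -> ACG F u v -> ACG H u v.
Proof.
  intros HE [Hc [En (HE1 & HE2 & HE3)]]. split. eapply cont_shift; eauto.
  exists En. refine (conj HE1 (conj HE2 _)). intros n. apply AC_shift with (F := F) (C := C); auto.
  intros x Hx. apply HE. apply (HE2 n); auto.
Qed.

Lemma ACG_degen F p : ACG F p p.
Proof.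
  split.
  - intros x Hx eps He. exists 1; split; [lra|]. intros t Ht _.
    replace t with p by lra. replace x with p by lra. rewrite Rminus_diag, Rabs_R0; auto.
  - exists (fun _ x => x = p). refine (conj _ (conj _ _)).
    + intros x Hx; exists O; lra.
    + intros n x ->; lra.
    + intros n; apply AC_single.
Qed.

Lemma ACG_union F c d (u v : nat -> R) : c <= d -> cont_on F c d ->
  (forall k, c <= u k /\ v k <= d) -> (forall k, ACG F (u k) (v k)) ->
  (forall x, c <= x <= d -> x = d \/ exists k, u k <= x <= v k) -> ACG F c d.
Proof.
  intros Hcd Hc Huv HA Hcov. split; auto.
  assert (HA' : forall k, exists En : nat -> R -> Prop, (forall x, u k <= x <= v k -> exists n, En n x) /\
    (forall n x, En n x -> u k <= x <= v k) /\ (forall n, AC_on F (En n))).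
  { intros k; destruct (HA k) as [_ H]; exact H. }
  apply ch in HA'. destruct HA' as [E HE].
  exists (fun m => match m with O => fun x => x = d | S m' => let (i, j) := of_nat m' in E i j end).
  refine (conj _ (conj _ _)).
  - intros x Hx. destruct (Hcov x Hx) as [->|[k Hk]]. exists O; auto.
    destruct (proj1 (HE k) x Hk) as [n Hn]. exists (S (to_nat (k, n))). rewrite cancel_of_to; auto.
  - intros [|m] x Hx. lra. destruct (of_nat m) as [i j]. pose proof (proj1 (proj2 (HE i)) j x Hx).
    pose proof (Huv i); lra.
  - intros [|m]. apply AC_single. destruct (of_nat m) as [i j]. apply HE.
Qed.

Lemma bad_union h F c d (u v : nat -> R) :
  (forall k, c <= u k /\ v k <= d) ->
  (forall x, c <= x <= d -> x = d \/ exists k, u k <= x <= v k) ->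
  (forall k, null (bad h F (u k) (v k))) -> null (bad h F c d).
Proof.
  intros Huv Hcov Hn.
  apply null_union with (B := fun m => let (i, k) := of_nat m in
     match i with O => bad h F (u k) (v k) | 1%nat => (fun x => x = u k)
      | 2%nat => (fun x => x = v k) | _ => (fun x => x = d) end).
  - intros m. destruct (of_nat m) as [i k]. destruct i as [|[|[|i]]]; auto; apply null_single.
  - intros x [Hx Hna]. destruct (Hcov x Hx) as [->|[k Hk]].
    + exists (to_nat (3%nat, O)). rewrite cancel_of_to. auto.
    + destruct (Req_dec x (u k)). exists (to_nat (1%nat, k)). rewrite cancel_of_to. auto.
      destruct (Req_dec x (v k)). exists (to_nat (2%nat, k)). rewrite cancel_of_to. auto.
      exists (to_nat (O, k)). rewrite cancel_of_to. split; auto.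
      intro Ha. apply Hna. apply ap_local with (u k) (v k); auto; try apply Huv; lra.
Qed.

Lemma prim_restrict h F c d u v : c <= u -> v <= d -> prim h F c d -> prim h F u v.
Proof.
  intros H1 H2 [HA HN]. split. eapply ACG_restrict; eauto.
  apply null_mono with (E := fun x => c <= x <= d /\ ~ ap_deriv F c d x (h x)); auto.
  intros x [Hx Hna]. split. lra. intro Ha. apply Hna. eapply ap_restrict; eauto.
Qed.

Lemma prim_shift h F H C u v : (forall t, u <= t <= v -> H t = F t + C) -> prim h F u v -> prim h H u v.
Proof.
  intros HE [HA HN]. split. eapply ACG_shift; eauto.
  apply null_mono with (E := fun x => u <= x <= v /\ ~ ap_deriv F u v x (h x)); auto.
  intros x [Hx Hna]. split; auto. intro Ha. apply Hna.
  apply ap_shift with (F := F) (C := C); auto.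
Qed.

Lemma prim_degen h F p : prim h F p p.
Proof.
  split. apply ACG_degen. apply null_mono with (E := fun x => x = p). intros x [Hx _]; lra.
  apply null_single.
Qed.

Lemma prim_union h F c d (u v : nat -> R) : c <= d -> cont_on F c d ->
  (forall k, c <= u k /\ v k <= d) -> (forall k, prim h F (u k) (v k)) ->
  (forall x, c <= x <= d -> x = d \/ exists k, u k <= x <= v k) -> prim h F c d.
Proof.
  intros Hcd Hc Huv HP Hcov. split.
  apply ACG_union with u v; auto. intros k; apply HP.
  apply (bad_union h F c d u v); auto. intros k; apply HP.
Qed.

Lemma prim_concat h F u v w : u <= v -> v <= w -> prim h F u v -> prim h F v w -> prim h F u w.
Proof.
  intros H1 H2 P1 P2.
  apply prim_union with (u := fun k => match k with O => u | _ => v end)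
                        (v := fun k => match k with O => v | _ => w end).
  lra. apply cont_concat with v. apply P1. apply P2.
  intros [|k]; lra. intros [|k]; auto.
  intros x Hx. right. destruct (Rle_dec x v). exists O; lra. exists 1%nat; lra.
Qed.

Lemma D_int_prim h c d v : D_int h c d v -> exists F, prim h F c d /\ v = F d - F c.
Proof. intros [_ [F (H1 & H2 & H3)]]. exists F; split; auto; split; auto. Qed.

Lemma prim_D_int h F c d : c <= d -> prim h F c d -> D_int h c d (F d - F c).
Proof. intros H [H1 H2]. split; auto. exists F; auto. Qed.

Section Seq.
Variables a b c : R.
Hypothesis Hac : a <= c.
Hypothesis Hcb : c < b.
Definition sq (n : nat) : R := match n with O => a | S n => b - (b - c) / (INR n + 1) end.

Lemma sq_S n : sq (S n) = b - (b - c) / (INR n + 1).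
Proof. reflexivity. Qed.

Lemma sq_lt_b n : sq n < b.
Proof.
  destruct n. simpl; lra. rewrite sq_S. pose proof (pos_INR n).
  assert (0 < (b - c) / (INR n + 1)) by (apply Rdiv_lt_0_compat; lra). lra.
Qed.

Lemma sq_1 : sq 1 = c.
Proof. rewrite sq_S. simpl. field. Qed.

Lemma sq_step n : sq n <= sq (S n).
Proof.
  destruct n. rewrite sq_1; simpl; lra.
  rewrite !sq_S. pose proof (pos_INR n). rewrite S_INR.
  assert ((b - c) / (INR n + 1 + 1) <= (b - c) / (INR n + 1)).
  { unfold Rdiv. apply Rmult_le_compat_l. lra. apply Rinv_le_contravar; lra. } lra.
Qed.

Lemma sq_step_strict n : sq (S n) < sq (S (S n)).
Proof.
  rewrite !sq_S. pose proof (pos_INR n). rewrite S_INR.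
  assert ((b - c) / (INR n + 1 + 1) < (b - c) / (INR n + 1)).
  { unfold Rdiv. apply Rmult_lt_compat_l. lra. apply Rinv_lt_contravar; nra. } lra.
Qed.

Lemma sq_mono m n : (m <= n)%nat -> sq m <= sq n.
Proof. intros H; induction H. lra. pose proof (sq_step m0); lra. Qed.

Lemma sq_strict m n : (1 <= m)%nat -> (m < n)%nat -> sq m < sq n.
Proof.
  intros H1 H2. induction H2. destruct m. lia. apply sq_step_strict.
  destruct m0. lia. pose proof (sq_step_strict m0); lra.
Qed.

Lemma sq_ge_a n : a <= sq n.
Proof. change a with (sq 0). apply sq_mono; lia. Qed.

Lemma sq_cover x : x < b -> exists n, x < sq n.
Proof.
  intros Hx. destruct (INR_unbounded ((b - c) / (b - x))) as [n Hn].
  exists (S n). rewrite sq_S.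
  assert ((b - c) / (INR n + 1) < b - x).
  { apply Rmult_lt_reg_r with (INR n + 1). pose proof (pos_INR n); lra.
    unfold Rdiv. rewrite Rmult_assoc, Rinv_l by (pose proof (pos_INR n); lra).
    apply Rmult_lt_reg_r with (/ (b - x)). apply Rinv_0_lt_compat; lra.
    rewrite Rmult_1_r. replace ((b - x) * (INR n + 1) * / (b - x)) with (INR n + 1) by (field; lra).
    unfold Rdiv in Hn. lra. }
  lra.
Qed.

Lemma sq_locate x : a <= x < b -> exists n, sq n <= x <= sq (S n).
Proof.
  intros Hx. destruct (sq_cover x (proj2 Hx)) as [n Hn].
  induction n. simpl in Hn; lra.
  destruct (Rle_dec (sq n) x). exists n; lra. apply IHn; lra.
Qed.
End Seq.

Lemma hake h a b c K L : a <= c < b ->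
  D_int h a c K ->
  (forall t, a <= t < b -> D_integrable h a t) ->
  (forall eps, 0 < eps -> exists delta, 0 < delta /\ forall t, a <= t < b -> b - delta < t ->
     forall v, D_int h a t v -> Rabs (v - L) < eps) ->
  D_int h c b (L - K).
Proof.
  intros [Hac Hcb] HK Hint Hlim.
  set (s := sq a b c).
  assert (Hs_lt : forall n, s n < b) by (intros; apply sq_lt_b; auto).
  assert (Hs_ge : forall n, a <= s n) by (intros; apply sq_ge_a; auto).
  assert (Hs0 : s O = a) by reflexivity.
  assert (Hs1 : s 1%nat = c) by apply sq_1.
  assert (Hs_step : forall n, s n <= s (S n)) by (intros; apply sq_step; auto).
  assert (Hs_strict : forall m n, (1 <= m)%nat -> (m < n)%nat -> s m < s n) by (intros; apply sq_strict; auto).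
  assert (Hs_cover : forall x, x < b -> exists n, x < s n) by (intros; apply sq_cover; auto).
  clearbody s.
  assert (Hp : forall n, exists F, prim h F (s n) (s (S n)) /\ (n = O -> K = F (s 1%nat) - F (s O))).
  { intros [|n].
    - destruct (D_int_prim _ _ _ _ HK) as [F [HF HKF]]. exists F. rewrite Hs1, Hs0. auto.
    - assert (Ht : a <= s (S (S n)) < b) by auto.
      destruct (Hint _ Ht) as [v Hv]. destruct (D_int_prim _ _ _ _ Hv) as [F [HF _]].
      exists F. split; [|intros; lia]. apply prim_restrict with a (s (S (S n))); auto.
      pose proof (Hs_ge (S n)); lra. }
  apply ch in Hp. destruct Hp as [Fp HFp].
  pose (Cs := fix Cs n := match n with O => 0 | S n => Cs n + Fp n (s (S n)) - Fp n (s n) end).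
  pose (H := fun x => if Rlt_dec x b then
     (let n := epsilon (inhabits O) (fun n => s n <= x <= s (S n)) in Cs n + Fp n x - Fp n (s n)) else L).
  assert (Hkey0 : forall m n x, (m < n)%nat -> s m <= x <= s (S m) -> s n <= x <= s (S n) ->
     Cs m + Fp m x - Fp m (s m) = Cs n + Fp n x - Fp n (s n)).
  { intros m n x Hmn Hm Hn. destruct (Nat.eq_dec n (S m)) as [->|Hne].
    - assert (Hx : x = s (S m)) by lra.
      change (Cs (S m)) with (Cs m + Fp m (s (S m)) - Fp m (s m)). rewrite Hx. ring.
    - exfalso. assert (s (S m) < s n) by (apply Hs_strict; lia). lra. }
  assert (Hkey : forall n x, s n <= x <= s (S n) -> H x = Cs n + Fp n x - Fp n (s n)).
  { intros n x Hx. unfold H. assert (Hxb : x < b) by (pose proof (Hs_lt (S n)); lra).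
    destruct (Rlt_dec x b) as [_|]; [|lra]. cbv zeta.
    set (m := epsilon _ _). assert (Hm : s m <= x <= s (S m)).
    { apply (epsilon_spec (inhabits O) (fun n => s n <= x <= s (S n))). exists n; auto. }
    clearbody m. destruct (Compare_dec.lt_eq_lt_dec m n) as [[Hlt|Heq]|Hlt]. apply Hkey0; auto. subst m; auto. symmetry; apply Hkey0; auto. }
  assert (HpH : forall n, prim h H (s n) (s (S n))).
  { intros n. apply prim_shift with (F := Fp n) (C := Cs n - Fp n (s n)).
    intros t Ht. rewrite (Hkey n t Ht). ring. apply HFp. }
  assert (HpA : forall n, prim h H a (s n)).
  { induction n. rewrite Hs0. apply prim_degen. apply prim_concat with (s n). apply Hs_ge. apply Hs_step.
    auto. auto. }
  assert (Ha0 : H a = 0). { rewrite (Hkey O a). simpl. rewrite Hs0. ring. rewrite Hs0, Hs1; lra. }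
  assert (HcK : H c = K). { rewrite (Hkey O c). simpl. destruct (HFp O) as [_ HK0]. rewrite HK0 by auto.
     rewrite Hs0, Hs1. ring. rewrite Hs0, Hs1; lra. }
  assert (HbL : H b = L). { unfold H. destruct (Rlt_dec b b); [lra|auto]. }
  assert (Hpt : forall t, a <= t < b -> prim h H a t).
  { intros t Ht. destruct (Hs_cover t (proj2 Ht)) as [n Hn].
    apply prim_restrict with a (s n); auto. lra. lra. }
  assert (Hcont : cont_on H a b).
  { intros x Hx eps He. destruct (Rlt_le_dec x b) as [Hxb|Hxb].
    - destruct (Hs_cover x Hxb) as [n Hn].
      destruct (proj1 (HpA n)) as [Hc _]. destruct (Hc x ltac:(pose proof (Hs_ge n); lra) eps He) as [dl [Hdl Hh]].
      exists (Rmin dl (s n - x)). split. apply Rmin_pos; lra.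
      intros t Ht Htx. pose proof (Rmin_l dl (s n - x)); pose proof (Rmin_r dl (s n - x)).
      apply Rabs_def2 in Htx. apply Hh. lra. apply Rabs_def1; lra.
    - replace x with b by lra. destruct (Hlim eps He) as [dl [Hdl Hh]].
      exists dl; split; auto. intros t Ht Htx. rewrite HbL.
      destruct (Req_dec t b). subst t. rewrite HbL, Rminus_diag, Rabs_R0; lra.
      apply Rabs_def2 in Htx. apply Hh with t. lra. lra.
      replace (H t) with (H t - H a) by (rewrite Ha0; ring). apply prim_D_int. lra. apply Hpt; lra. }
  assert (HpB : prim h H a b).
  { apply prim_union with (u := fun _ => a) (v := s); auto. lra.
    intros k; split. lra. pose proof (Hs_lt k); lra.
    intros x Hx. destruct (Rlt_le_dec x b). right. destruct (Hs_cover x r) as [n Hn].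
    exists n; pose proof (Hs_ge n); lra. left; lra. }
  replace (L - K) with (H b - H c) by (rewrite HbL, HcK; ring).
  apply prim_D_int. lra. apply prim_restrict with a b; auto. lra.
Qed.

Section Ban.
Variable X : BanachSpace.
Notation "x +: y" := (bs_add X x y) (at level 50, left associativity).
Notation "-: x" := (bs_opp X x) (at level 35).
Notation "0:" := (bs_zero X).
Notation nrm := (bs_norm X).

Lemma add0l x : 0: +: x = x.
Proof. rewrite bs_add_comm. apply bs_add_zero. Qed.

Lemma add_cancel_r x y z : x +: z = y +: z -> x = y.
Proof.
  intros H. rewrite <- (bs_add_zero X x), <- (bs_add_zero X y), <- (bs_add_opp X z), !bs_add_assoc, H. auto.
Qed.

Lemma scal0 x : bs_scal X 0 x = 0:.
Proof.
  apply add_cancel_r with (bs_scal X 0 x). rewrite add0l, <- bs_scal_distr_r, Rplus_0_l. auto.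
Qed.

Lemma opp_scal x : -: x = bs_scal X (-1) x.
Proof.
  apply add_cancel_r with x. rewrite (bs_add_comm X (-: x)), bs_add_opp.
  rewrite <- (bs_scal_one X x) at 2. rewrite <- bs_scal_distr_r. replace (-1 + 1) with 0 by ring.
  rewrite scal0; auto.
Qed.

Lemma norm_zero : nrm 0: = 0.
Proof. rewrite <- (scal0 0:), bs_norm_scal, Rabs_R0. ring. Qed.

Lemma norm_opp x : nrm (-: x) = nrm x.
Proof. rewrite opp_scal, bs_norm_scal. replace (Rabs (-1)) with 1 by (rewrite Rabs_left; lra). ring. Qed.

Lemma norm_nonneg x : 0 <= nrm x.
Proof.
  pose proof (bs_norm_triangle X x (-: x)). rewrite bs_add_opp, norm_zero, norm_opp in H. lra.
Qed.

Lemma opp_add x y : -: (x +: y) = -: x +: -: y.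
Proof. rewrite !opp_scal, bs_scal_distr_l. auto. Qed.

Lemma opp_opp x : -: (-: x) = x.
Proof. rewrite !opp_scal, bs_scal_assoc. replace (-1 * -1) with 1 by ring. apply bs_scal_one. Qed.

Lemma sub_sym x y : nrm (x +: -: y) = nrm (y +: -: x).
Proof.
  rewrite <- norm_opp, opp_add, opp_opp, bs_add_comm. auto.
Qed.

Lemma sub_split x y z : x +: -: z = (x +: -: y) +: (y +: -: z).
Proof.
  rewrite bs_add_assoc. rewrite <- (bs_add_assoc X x (-: y) y).
  rewrite (bs_add_comm X (-: y) y), bs_add_opp, bs_add_zero. auto.
Qed.

Lemma sub_tri x y z : nrm (x +: -: z) <= nrm (x +: -: y) + nrm (y +: -: z).
Proof. rewrite (sub_split x y z). apply bs_norm_triangle. Qed.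

Lemma add_sub x v : (x +: v) +: -: x = v.
Proof. rewrite (bs_add_comm X x v), <- bs_add_assoc, bs_add_opp, bs_add_zero. auto. Qed.

Lemma sub_add x l : x +: (l +: -: x) = l.
Proof. rewrite (bs_add_comm X l), bs_add_assoc, bs_add_opp, add0l. auto. Qed.

Lemma norm_eq0 x : nrm x = 0 -> x = 0:.
Proof. apply bs_norm_eq0. Qed.

Lemma f_add f x y : is_dual X f -> f (x +: y) = f x + f y.
Proof. intros [H _]; auto. Qed.
Lemma f_scal f r x : is_dual X f -> f (bs_scal X r x) = r * f x.
Proof. intros [_ [H _]]; auto. Qed.
Lemma f_opp f x : is_dual X f -> f (-: x) = - f x.
Proof. intros Hf. rewrite opp_scal, f_scal by auto. ring. Qed.
Lemma f_zero f : is_dual X f -> f 0: = 0.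
Proof. intros Hf. rewrite <- (scal0 0:), f_scal by auto. ring. Qed.

Lemma lt_eps_le a b : (forall eps, 0 < eps -> a < b + eps) -> a <= b.
Proof.
  intros H. destruct (Rle_dec a b); auto. specialize (H ((a - b)/2)). lra.
Qed.

Lemma opnorm f : is_dual X f -> exists N, (forall x, Rabs (f x) <= N * nrm x) /\
   (forall eps, 0 < eps -> exists x, nrm x <= 1 /\ N - eps < Rabs (f x)).
Proof.
  intros Hf. pose proof Hf as [_ [_ [M HM]]].
  set (E := fun r => exists x, nrm x <= 1 /\ r = Rabs (f x)).
  assert (Hb : bound E).
  { exists (Rmax M 0). intros r [x [Hx ->]]. eapply Rle_trans. apply HM.
    pose proof (norm_nonneg x). pose proof (Rmax_l M 0). pose proof (Rmax_r M 0).
    apply Rle_trans with (Rmax M 0 * nrm x). apply Rmult_le_compat_r; lra.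
    rewrite <- (Rmult_1_r (Rmax M 0)) at 2. apply Rmult_le_compat_l; lra. }
  assert (He : exists r, E r). { exists (Rabs (f 0:)). exists 0:. rewrite norm_zero. split; [lra|auto]. }
  destruct (completeness E Hb He) as [N [HN1 HN2]].
  assert (HN0 : 0 <= N). { apply HN1. exists 0:. rewrite norm_zero, f_zero, Rabs_R0 by auto. split; lra. }
  exists N; split.
  - intros x. destruct (Req_dec (nrm x) 0) as [H0|H0].
    + rewrite (norm_eq0 x H0), f_zero, Rabs_R0, norm_zero by auto. lra.
    + pose proof (norm_nonneg x).
      assert (Hz : E (Rabs (f (bs_scal X (/ nrm x) x)))).
      { exists (bs_scal X (/ nrm x) x). split; auto. rewrite bs_norm_scal, Rabs_inv, Rabs_right by lra.
        rewrite Rinv_l by auto. lra. }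
      apply HN1 in Hz. rewrite f_scal, Rabs_mult, Rabs_inv, (Rabs_right (nrm x)) in Hz by (auto; lra).
      apply Rmult_le_reg_l with (/ nrm x). apply Rinv_0_lt_compat; lra.
      replace (/ nrm x * (N * nrm x)) with N by (field; auto). lra.
  - intros eps Heps. apply NNPP. intros Hn.
    assert (N <= N - eps); [|lra]. apply HN2. intros r [x [Hx ->]].
    apply Rnot_lt_le. intro Hc. apply Hn. exists x; auto.
Qed.

Lemma abs_pick p q : Rabs (p - q) <= Rabs (p + q) -> Rabs q <= Rabs (p + q).
Proof. unfold Rabs; repeat destruct Rcase_abs; lra. Qed.
Lemma abs_pick2 p q : ~ Rabs (p - q) <= Rabs (p + q) -> Rabs q <= Rabs (p - q).
Proof. unfold Rabs; repeat destruct Rcase_abs; lra. Qed.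

Fixpoint xseq (T : nat -> X -> R) (idx : nat -> nat) (w : nat -> X) (k : nat) : X :=
  match k with
  | O => 0:
  | S k => let n := idx (S k) in let u := bs_scal X ((/3) ^ (S k)) (w n) in
      if Rle_dec (Rabs (T n (xseq T idx w k +: -: u))) (Rabs (T n (xseq T idx w k +: u)))
      then xseq T idx w k +: u else xseq T idx w k +: -: u
  end.

Lemma pow3_pos k : 0 < (/3) ^ k.
Proof. apply pow_lt. lra. Qed.

Lemma ubp (T : nat -> X -> R) : (forall n, is_dual X (T n)) ->
  (forall y, exists B, forall n, Rabs (T n y) <= B) ->
  exists M, forall n y, Rabs (T n y) <= M * nrm y.
Proof.
  intros HT Hpw. apply NNPP. intros Hno.
  assert (HN : forall n, exists N, (forall x, Rabs (T n x) <= N * nrm x) /\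
     (forall eps, 0 < eps -> exists x, nrm x <= 1 /\ N - eps < Rabs (T n x))) by (intros; apply opnorm; auto).
  apply ch in HN. destruct HN as [Nn HNn].
  assert (Hidx : forall k, exists n, 6 * 3 ^ k * INR k < Nn n).
  { intros k. apply NNPP; intros Hk. apply Hno. exists (6 * 3 ^ k * INR k). intros n y.
    assert (Nn n <= 6 * 3 ^ k * INR k) by (apply Rnot_lt_le; intro; apply Hk; exists n; auto).
    eapply Rle_trans. apply HNn. apply Rmult_le_compat_r; auto. apply norm_nonneg. }
  apply ch in Hidx. destruct Hidx as [idx Hidx].
  assert (Hw : forall n, exists x, nrm x <= 1 /\ (0 < Nn n -> 2/3 * Nn n < Rabs (T n x))).
  { intros n. destruct (Rlt_le_dec 0 (Nn n)) as [Hp|Hp].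
    - destruct (proj2 (HNn n) (Nn n / 3)) as [x [Hx1 Hx2]]. lra. exists x; split; auto. intros _; lra.
    - exists 0:. rewrite norm_zero. split. lra. intros; lra. }
  apply ch in Hw. destruct Hw as [w Hw].
  set (xs := xseq T idx w).
  assert (Q1 : forall k, nrm (xs (S k) +: -: xs k) <= (/3) ^ (S k) /\
      (/3) ^ (S k) * (2/3) * Nn (idx (S k)) <= Rabs (T (idx (S k)) (xs (S k)))).
  { intros k. unfold xs; simpl xseq. set (n := idx (S k)). set (x := xseq T idx w k).
    set (u := bs_scal X (/ 3 * (/ 3) ^ k) (w n)).
    assert (Hu : nrm u <= (/3) ^ (S k)).
    { unfold u. rewrite bs_norm_scal. pose proof (pow3_pos (S k)). simpl in H |- *.
      rewrite Rabs_right by lra. pose proof (proj1 (Hw n)). rewrite <- Rmult_1_r. apply Rmult_le_compat_l; lra. }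
    assert (HTu : (/3) ^ (S k) * (2/3) * Nn n <= Rabs (T n u)).
    { unfold u. rewrite f_scal, Rabs_mult by auto. pose proof (pow3_pos (S k)). simpl in H |- *.
      rewrite (Rabs_right (/ 3 * (/ 3) ^ k)) by lra.
      assert (Hpos : 0 < Nn n).
      { unfold n. eapply Rle_lt_trans; [|apply Hidx]. pose proof (pos_INR (S k)). pose proof (pow_lt 3 (S k)).
        apply Rmult_le_pos; [|lra]. apply Rmult_le_pos; lra. }
      pose proof (proj2 (Hw n) Hpos). rewrite Rmult_assoc. apply Rmult_le_compat_l; lra. }
    destruct Rle_dec as [Hc|Hc]; rewrite (f_add (T n)), (f_add (T n)), (f_opp (T n)) in Hc by auto.
    - split. rewrite add_sub. auto. rewrite (f_add (T n)) by auto. pose proof (abs_pick _ _ Hc). lra.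
    - split. rewrite add_sub, norm_opp. auto. rewrite (f_add (T n)), (f_opp (T n)) by auto. pose proof (abs_pick2 _ _ Hc).
      replace (T n x + - T n u) with (T n x - T n u) by ring. lra. }
  assert (Q3 : forall k m, (k <= m)%nat -> nrm (xs m +: -: xs k) <= ((/3) ^ k - (/3) ^ m) / 2).
  { intros k m Hkm. induction Hkm.
    - rewrite bs_add_opp, norm_zero. lra.
    - eapply Rle_trans. apply sub_tri with (y := xs m). pose proof (proj1 (Q1 m)).
      simpl in H |- *. lra. }
  assert (Q3' : forall k m, (k <= m)%nat -> nrm (xs m +: -: xs k) <= (/3) ^ k / 2).
  { intros k m Hkm. pose proof (Q3 k m Hkm). pose proof (pow3_pos m). lra. }
  destruct (bs_complete X xs) as [l Hl].
  { intros eps He. destruct (pow_lt_1_zero (/3) ltac:(rewrite Rabs_right; lra) eps He) as [N HNp].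
    exists N. intros m n Hm Hn. destruct (Nat.le_ge_cases n m) as [Hnm|Hnm].
    - pose proof (Q3' n m Hnm). specialize (HNp n Hn). rewrite Rabs_right in HNp by (left; apply pow3_pos).
      pose proof (pow3_pos n). lra.
    - rewrite sub_sym. pose proof (Q3' m n Hnm). specialize (HNp m Hm). rewrite Rabs_right in HNp by (left; apply pow3_pos).
      pose proof (pow3_pos m). lra. }
  assert (Q5 : forall k, nrm (l +: -: xs k) <= (/3) ^ k / 2).
  { intros k. apply lt_eps_le. intros eps He. destruct (Hl eps He) as [N HN].
    specialize (HN (max N k) ltac:(lia)). pose proof (Q3' k (max N k) ltac:(lia)).
    pose proof (sub_tri l (xs (max N k)) (xs k)). rewrite sub_sym in HN. lra. }
  destruct (Hpw l) as [B HB].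
  destruct (INR_unbounded B) as [k Hk].
  set (n := idx (S k)).
  assert (Hl1 : T n l = T n (xs (S k)) + T n (l +: -: xs (S k))).
  { rewrite <- f_add by auto. rewrite sub_add. auto. }
  pose proof (proj2 (Q1 k)) as Hq. fold n in Hq.
  pose proof (proj1 (HNn n) (l +: -: xs (S k))) as Hb. pose proof (Q5 (S k)).
  pose proof (Hidx (S k)) as Hi. fold n in Hi.
  pose proof (pos_INR k). rewrite S_INR in Hi.
  assert (Hpos : 0 < Nn n). { eapply Rle_lt_trans; [|apply Hi]. pose proof (pow_lt 3 (S k)). nra. }
  assert (Hb2 : Rabs (T n (l +: -: xs (S k))) <= Nn n * ((/3) ^ (S k) / 2)).
  { eapply Rle_trans. apply Hb. apply Rmult_le_compat_l; lra. }
  assert (Hlow : Nn n * (/3) ^ (S k) / 6 <= Rabs (T n l)).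
  { pose proof (Rabs_triang (T n l) (- T n (l +: -: xs (S k)))) as Ht.
    rewrite Rabs_Ropp in Ht.
    replace (T n l + - T n (l +: -: xs (S k))) with (T n (xs (S k))) in Ht by (rewrite Hl1; ring).
    lra. }
  assert (Hinv : (/3) ^ (S k) * 3 ^ (S k) = 1).
  { rewrite <- Rpow_mult_distr, Rinv_l, pow1; lra. }
  assert (Nn n * (/3) ^ (S k) / 6 > INR k + 1).
  { apply Rmult_lt_compat_r with (r := (/3) ^ (S k) / 6) in Hi. 2: { pose proof (pow3_pos (S k)); lra. }
    replace (6 * 3 ^ S k * (INR k + 1) * ((/ 3) ^ S k / 6)) with ((INR k + 1) * ((/3) ^ (S k) * 3 ^ (S k))) in Hi by field.
    rewrite Hinv in Hi. lra. }
  specialize (HB n). lra.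
Qed.
End Ban.

Lemma zero_small z : (forall eps, 0 < eps -> Rabs z < eps) -> z = 0.
Proof.
  intros H. destruct (Req_dec z 0); auto. exfalso.
  specialize (H (Rabs z) (Rabs_pos_lt z H0)). lra.
Qed.

Lemma pick_t a b d : a < b -> 0 < d -> exists t, a <= t < b /\ b - d < t.
Proof.
  intros Hab Hd. exists (b - Rmin d (b - a) / 2).
  pose proof (Rmin_l d (b-a)); pose proof (Rmin_r d (b-a)).
  assert (0 < Rmin d (b - a)) by (apply Rmin_pos; lra). lra.
Qed.

Lemma lim_unique h a b L v : a < b -> D_int h a b v ->
  (forall eps, 0 < eps -> exists delta, 0 < delta /\ forall t, a <= t < b -> b - delta < t ->
     forall w, D_int h a t w -> Rabs (w - L) < eps) -> v = L.
Proof.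
  intros Hab Hv Hlim. destruct (D_int_prim _ _ _ _ Hv) as [G [HG ->]].
  apply Rminus_diag_uniq. apply zero_small. intros eps He.
  destruct (Hlim (eps/2) ltac:(lra)) as [d1 [Hd1 Hh1]].
  destruct (proj1 (proj1 HG) b ltac:(lra) (eps/2) ltac:(lra)) as [d2 [Hd2 Hh2]].
  destruct (pick_t a b (Rmin d1 d2) Hab ltac:(apply Rmin_pos; lra)) as [t [Ht1 Ht2]].
  pose proof (Rmin_l d1 d2); pose proof (Rmin_r d1 d2).
  assert (Hw : D_int h a t (G t - G a)).
  { apply prim_D_int. lra. apply prim_restrict with a b; auto; lra. }
  specialize (Hh1 t Ht1 ltac:(lra) _ Hw).
  assert (Rabs (G t - G b) < eps / 2) by (apply Hh2; [lra| rewrite Rabs_left; lra]).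
  replace (G b - G a - L) with ((G t - G a - L) - (G t - G b)) by ring.
  eapply Rle_lt_trans. apply Rabs_triang. rewrite Rabs_Ropp. lra.
Qed.

Definition zdual (X : BanachSpace) : dual X.
Proof.
  exists (fun _ => 0). split; [|split]. intros; ring. intros; ring. exists 0. intros; rewrite Rabs_R0; lra.
Defined.

Theorem proposition2p1 (X : BanachSpace) (g : R -> dual X) (a b : R) :
  a < b ->
  (forall t, a <= t < b -> DG_integrable g a t) ->
  (forall y : X, exists L, forall eps, 0 < eps -> exists delta, 0 < delta /\
     forall t, a <= t < b -> b - delta < t -> forall v, D_int (yg g y) a t v ->
       Rabs (v - L) < eps) ->
  DG_integrable g a b /\
  (forall (I : dual X) (J : R -> dual X),
     DG_int g a b I ->
     (forall t, a <= t < b -> DG_int g a t (J t)) ->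
     forall y : X, forall eps, 0 < eps -> exists delta, 0 < delta /\
       forall t, a <= t < b -> b - delta < t -> Rabs (ev (J t) y - ev I y) < eps).
Proof.
  intros Hab Hint Hlim.
  apply ch in Hlim. destruct Hlim as [Lf HLf].
  assert (HJ : forall t, exists ys, a <= t < b -> DG_int g a t ys).
  { intros t. destruct (classic (a <= t < b)) as [Ht|Ht].
    - destruct (proj2 (Hint t Ht) a t) as [ys Hys]; try lra. exists ys; auto.
    - exists (zdual X). intros; contradiction. }
  apply ch in HJ. destruct HJ as [Jf HJf].
  assert (HJl : forall y eps, 0 < eps -> exists delta, 0 < delta /\ forall t, a <= t < b -> b - delta < t ->
     Rabs (ev (Jf t) y - Lf y) < eps).
  { intros y eps He. destruct (HLf y eps He) as [d [Hd Hh]]. exists d; split; auto.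
    intros t Ht Htd. apply (Hh t Ht Htd). exact (HJf t Ht y). }
  assert (HJd : forall t, is_dual X (ev (Jf t))). { intros t. unfold ev. apply (proj2_sig (Jf t)). }
  assert (Ladd : forall y1 y2, Lf (bs_add X y1 y2) = Lf y1 + Lf y2).
  { intros y1 y2. apply Rminus_diag_uniq. apply zero_small. intros eps He.
    destruct (HJl (bs_add X y1 y2) (eps/3) ltac:(lra)) as [d1 [Hd1 H1]].
    destruct (HJl y1 (eps/3) ltac:(lra)) as [d2 [Hd2 H2]].
    destruct (HJl y2 (eps/3) ltac:(lra)) as [d3 [Hd3 H3]].
    destruct (pick_t a b (Rmin d1 (Rmin d2 d3)) Hab ltac:(repeat apply Rmin_pos; lra)) as [t [Ht1 Ht2]].
    pose proof (Rmin_l d1 (Rmin d2 d3)); pose proof (Rmin_r d1 (Rmin d2 d3));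
    pose proof (Rmin_l d2 d3); pose proof (Rmin_r d2 d3).
    specialize (H1 t Ht1 ltac:(lra)); specialize (H2 t Ht1 ltac:(lra)); specialize (H3 t Ht1 ltac:(lra)).
    rewrite f_add in H1 by auto. revert H1 H2 H3. unfold Rabs; repeat destruct Rcase_abs; lra. }
  assert (Lscal : forall r y, Lf (bs_scal X r y) = r * Lf y).
  { intros r y. apply Rminus_diag_uniq. apply zero_small. intros eps He.
    set (e := eps / (2 * (Rabs r + 1))).
    assert (He' : 0 < e) by (unfold e; apply Rdiv_lt_0_compat; [lra| pose proof (Rabs_pos r); lra]).
    destruct (HJl (bs_scal X r y) e He') as [d1 [Hd1 H1]].
    destruct (HJl y e He') as [d2 [Hd2 H2]].
    destruct (pick_t a b (Rmin d1 d2) Hab ltac:(apply Rmin_pos; lra)) as [t [Ht1 Ht2]].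
    pose proof (Rmin_l d1 d2); pose proof (Rmin_r d1 d2).
    specialize (H1 t Ht1 ltac:(lra)); specialize (H2 t Ht1 ltac:(lra)).
    rewrite f_scal in H1 by auto.
    replace (Lf (bs_scal X r y) - r * Lf y) with (- (r * ev (Jf t) y - Lf (bs_scal X r y)) + r * (ev (Jf t) y - Lf y)) by ring.
    eapply Rle_lt_trans. apply Rabs_triang. rewrite Rabs_Ropp, Rabs_mult.
    assert (Rabs r * Rabs (ev (Jf t) y - Lf y) <= Rabs r * e) by (apply Rmult_le_compat_l; [apply Rabs_pos| lra]).
    assert (e * (2 * (Rabs r + 1)) = eps) by (unfold e; field; pose proof (Rabs_pos r); lra).
    pose proof (Rabs_pos r). nra. }
  set (tn := fun n : nat => b - (b - a) / (INR n + 1)).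
  assert (Htn : forall n, a <= tn n < b).
  { intros n. unfold tn. pose proof (pos_INR n).
    assert (0 < (b - a) / (INR n + 1)) by (apply Rdiv_lt_0_compat; lra).
    assert ((b - a) / (INR n + 1) <= b - a).
    { unfold Rdiv. rewrite <- (Rmult_1_r (b - a)) at 2. apply Rmult_le_compat_l. lra.
      rewrite <- Rinv_1. apply Rinv_le_contravar; lra. }
    lra. }
  assert (Htn_close : forall d, 0 < d -> exists N, forall n, (N <= n)%nat -> b - d < tn n).
  { intros d Hd. destruct (INR_unbounded ((b - a) / d)) as [N HN]. exists N. intros n Hn.
    unfold tn. apply le_INR in Hn. pose proof (pos_INR N).
    assert ((b - a) / (INR n + 1) < d); [|lra].
    apply Rmult_lt_reg_r with (INR n + 1). lra. unfold Rdiv.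
    rewrite Rmult_assoc, Rinv_l, Rmult_1_r by lra.
    assert ((b - a) / d * d = b - a) by (field; lra). unfold Rdiv in H0. nra. }
  destruct (ubp X (fun n => ev (Jf (tn n)))) as [M HM].
  { intros n; apply HJd. }
  { intros y. destruct (HJl y 1 ltac:(lra)) as [d [Hd Hh]]. destruct (Htn_close d Hd) as [N HN].
    exists (fsum (fun k => Rabs (ev (Jf (tn k)) y)) N + Rabs (Lf y) + 1). intros n.
    pose proof (fsum_nonneg (fun k => Rabs (ev (Jf (tn k)) y)) N (fun i => Rabs_pos _)).
    destruct (Nat.lt_ge_cases n N) as [Hn|Hn].
    - pose proof (fsum_le_term (fun k => Rabs (ev (Jf (tn k)) y)) N n (fun i => Rabs_pos _) Hn).
      simpl in *. pose proof (Rabs_pos (Lf y)). lra.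
    - specialize (Hh (tn n) (Htn n) (HN n Hn)).
      pose proof (Rabs_triang (ev (Jf (tn n)) y - Lf y) (Lf y)).
      replace (ev (Jf (tn n)) y - Lf y + Lf y) with (ev (Jf (tn n)) y) in H0 by ring. lra. }
  assert (Lbound : forall y, Rabs (Lf y) <= M * bs_norm X y).
  { intros y. apply lt_eps_le. intros eps He.
    destruct (HJl y eps He) as [d [Hd Hh]]. destruct (Htn_close d Hd) as [N HN].
    specialize (Hh (tn N) (Htn N) (HN N (le_n _))). specialize (HM N y).
    pose proof (Rabs_triang (ev (Jf (tn N)) y) (- (ev (Jf (tn N)) y - Lf y))).
    rewrite Rabs_Ropp in H. replace (ev (Jf (tn N)) y + - (ev (Jf (tn N)) y - Lf y)) with (Lf y) in H by ring.
    simpl in HM. lra. }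
  assert (HLd : is_dual X Lf). { split; [|split]; auto. exists M; auto. }
  assert (Hcb : forall c, a <= c < b -> exists ys, DG_int g c b ys).
  { intros c Hc. destruct (proj2 (Hint c Hc) a c) as [K HK]; try lra.
    assert (HKd : is_dual X (ev K)) by (unfold ev; apply (proj2_sig K)).
    assert (Hd : is_dual X (fun y => Lf y - ev K y)).
    { split; [|split].
      - intros x y. rewrite Ladd, (f_add X (ev K)) by auto. ring.
      - intros r x. rewrite Lscal, (f_scal X (ev K)) by auto. ring.
      - destruct HKd as [_ [_ [MK HMK]]]. exists (M + MK). intros x.
        eapply Rle_trans. apply Rabs_triang. rewrite Rabs_Ropp. specialize (Lbound x). specialize (HMK x). lra. }
    exists (exist _ (fun y => Lf y - ev K y) Hd). intros y. unfold ev at 1; simpl.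
    apply hake with a. lra. apply HK. intros t Ht. apply (proj1 (Hint t Ht)). apply HLf. }
  split.
  - split.
    + intros y. destruct (Hcb a ltac:(lra)) as [ys Hys]. exists (ev ys y). apply Hys.
    + intros c d Hc Hcd Hd. destruct (Rlt_le_dec d b) as [Hdb|Hdb].
      * apply (proj2 (Hint d ltac:(lra))); lra.
      * assert (d = b) by lra. subst d. destruct (Rlt_le_dec c b) as [Hcb'|Hcb'].
        -- apply Hcb; lra.
        -- assert (c = b) by lra. subst c. exists (zdual X). intros y.
           replace (ev (zdual X) y) with (0 - 0) by (unfold ev; simpl; ring).
           exact (prim_D_int (yg g y) (fun _ => 0) b b (Rle_refl b) (prim_degen _ _ _)).
  - intros I J HI HJt y eps He.
    assert (HIL : ev I y = Lf y) by (apply lim_unique with (yg g y) a b; auto).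
    destruct (HLf y eps He) as [d [Hd Hh]]. exists d; split; auto.
    intros t Ht Htd. rewrite HIL. apply (Hh t Ht Htd). exact (HJt t Ht y).
Qed.
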